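(* Let $G$ be a context-free grammar, $k\ge 0$, and let $N$ be its canonical LR($k$) NFA. Let $v_1=(\hat\Pi_1,\lambda_1)$ and $v_2=(\hat\Pi_2,\lambda_2)$ be vertices of $N$ that are both reachable from the starting vertex on the same string $\zeta\in(\Lambda\cup\Sigma)^*$ and that have conflicting actions on some lookahead $\mu\in\Gamma^k$. Then for every $\lambda_1'\in\mathcal U(\hat\Pi_1)$ with $\lambda_1'\equiv_{\hat\Pi_1}\lambda_1$ and every $\lambda_2'\in\mathcal U(\hat\Pi_2)$ with $\lambda_2'\equiv_{\hat\Pi_2}\lambda_2$, the vertices $(\hat\Pi_1,\lambda_1')$ and $(\hat\Pi_2,\lambda_2')$ have conflicting actions on $\mu$.
   Context: $G$ has finite nonterminal set $\Lambda$, terminal set $\Sigma$, $\Gamma=\Sigma\cup\{\dashv\}$ with $\dashv$ an end marker, and start symbol $S$ which appears on the left of exactly one production $S\to\eta$ and on no right-hand side. For $T\subseteq(\Lambda\cup\Gamma)^*$, $\mathrm{Gen}(T)$ is the set of $y\in\Gamma^*$ with $x\Rightarrow^*y$ for some $x\in T$, and $\mathrm{First}_k(T)=\{x_1\cdots x_{\min(k,r)}: x_1\cdots x_r\in T\}$; concatenations involving sets are taken elementwise. A dotted production is $X\to\alpha\cdot\beta$ where $X\to\alpha\beta$ is a production. Forward-reachable $k$-follow strings: the least assignment of subsets of $\Gamma^k$ to productions such that $\dashv^k$ is assigned to $S\to\eta$, and whenever $\lambda$ is assigned to $X\to\alpha Y\beta$ then every $\mu\in\mathrm{First}_k(\mathrm{Gen}(\beta\lambda))$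 is assigned to every production $Y\to\gamma$. For a dotted production $\hat\Pi$ with underlying production $\Pi$, $\mathcal U(\hat\Pi)$ is the set assigned to $\Pi$. Canonical LR($k$) NFA: vertices $(\hat\Pi,\lambda)$ with $\lambda\in\mathcal U(\hat\Pi)$; starting vertex $(S\to\cdot\,\eta,\dashv^k)$; $\varepsilon$-edges from $(X\to\alpha\cdot Y\beta,\lambda)$ to $(Y\to\cdot\,\gamma,\mu)$ whenever $\mu\in\mathrm{First}_k(\mathrm{Gen}(\beta\lambda))$; edges labeled $\tau\in\Lambda\cup\Sigma$ from $(X\to\alpha\cdot\tau\beta,\lambda)$ to $(X\to\alpha\tau\cdot\beta,\lambda)$. Actions: vertex $(X\to\alpha\,\cdot,\lambda)$ has action ``Reduce $X\to\alpha$'' on lookahead $\lambda$; vertex $(X\to\alpha\cdot\sigma\beta,\lambda)$ with $\sigma\in\Sigma$ has action ``Shift'' on each lookahead $\mu\in\mathrm{First}_k(\mathrm{Gen}(\sigma\beta\lambda))$; there are no other actions. Two vertices have conflicting actions on $\mu$ if they have distinct actions on $\mu$. A vertex is reachable on a string $\zeta\in(\Lambda\cup\Sigma)^*$ if there is a path of edges from the starting vertex whose labels, with $\varepsilon$'s deleted, concatenate to $\zeta$. The LR($0$) NFA is the case $k=0$ (vertices are effectively the dotted productions). A lookahead $\mu\in\Gamma^k$ is $\hat\Pi$-compatible with $\lambda\in\Gamma^k$, for $\hat\Pi=X\to\alpha\cdot\beta$, if $\mu\in\mathrm{First}_k(\mathrm{Gen}(\beta\lambda))$. A lookahead $\mu$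 is potentially-conflicting for $\hat\Pi$ if there exist a dotted production $\hat\Pi'$ and $\lambda\in\mathcal U(\hat\Pi)$, $\lambda'\in\mathcal U(\hat\Pi')$ such that the LR($0$) NFA vertices for $\hat\Pi$ and $\hat\Pi'$ are reachable on a common string $\zeta\in(\Sigma\cup\Lambda)^*$ in the LR($0$) NFA, and $(\hat\Pi,\lambda)$, $(\hat\Pi',\lambda')$ have conflicting actions on $\mu$ in the canonical LR($k$) NFA. For $\lambda,\lambda'\in\Gamma^k$, $\lambda\equiv_{\hat\Pi}\lambda'$ iff for every potentially-conflicting lookahead $\mu$ for $\hat\Pi$, $\mu$ is $\hat\Pi$-compatible with $\lambda$ iff it is $\hat\Pi$-compatible with $\lambda'$. *)

(* Defs.v *)
From mathcomp Require Import all_boot.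
From Stdlib Require Import List Relations.
Set Implicit Arguments. Unset Strict Implicit. Unset Printing Implicit Defensive.

(* Gamma = Sigma + {end marker} *)
Inductive gamma (Sigma : Type) := GT of Sigma | GEnd.
Arguments GEnd {Sigma}.

Record grammar (Lam : finType) (Sigma : Type) := Grammar {
  prods : list (Lam * list (Lam + Sigma));
  start : Lam;
  start_one : exists eta, List.In (start, eta) prods /\
                forall g, List.In (start, g) prods -> g = eta;
  start_not_rhs : forall X g, List.In (X, g) prods -> ~ List.In (inl start) g
}.

Section LR.
Variables (Lam : finType) (Sigma : Type) (G : grammar Lam Sigma).

Definition sym := (Lam + Sigma)%type.
Definition production := (Lam * list sym)%type.
(* symbols of sentential forms over Lam u Gamma *)
Definition ssym := (Lam + gamma Sigma)%type.

Definition emb (s : sym) : ssym :=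
  match s with inl X => inl X | inr a => inr (GT a) end.

Definition step (x y : list ssym) : Prop :=
  exists u w X g, List.In (X, g) (prods G) /\
    x = u ++ inl X :: w /\ y = u ++ map emb g ++ w.

Definition Gen (T : list ssym -> Prop) (y : list (gamma Sigma)) : Prop :=
  exists x, T x /\ clos_refl_trans _ step x (map inr y).

Definition Firstk (k : nat) (T : list (gamma Sigma) -> Prop)
  (mu : list (gamma Sigma)) : Prop :=
  exists x, T x /\ mu = take k x.

Definition follow (k : nat) (beta : list sym) (lam mu : list (gamma Sigma)) :=
  Firstk k (Gen (fun x => x = map emb beta ++ map inr lam)) mu.

Inductive U (k : nat) : production -> list (gamma Sigma) -> Prop :=
| U_start eta : List.In (start G, eta) (prods G) ->
    U k (start G, eta) (nseq k GEnd)
| U_step X alpha Y beta lam g mu :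
    List.In (X, alpha ++ inl Y :: beta) (prods G) ->
    U k (X, alpha ++ inl Y :: beta) lam ->
    List.In (Y, g) (prods G) ->
    follow k beta lam mu ->
    U k (Y, g) mu.

(* dotted production X -> alpha . beta  is (X, alpha, beta) *)
Definition dotted := (Lam * list sym * list sym)%type.
Definition under (d : dotted) : production := (d.1.1, d.1.2 ++ d.2).
Definition is_dotted (d : dotted) := List.In (under d) (prods G).

Definition vertex := (dotted * list (gamma Sigma))%type.
Definition is_vertex (k : nat) (v : vertex) :=
  is_dotted v.1 /\ U k (under v.1) v.2.

Definition eps_edge (k : nat) (v w : vertex) : Prop :=
  is_vertex k v /\ is_vertex k w /\
  exists X alpha Y beta lam g mu,
    v = ((X, alpha, inl Y :: beta), lam) /\ w = ((Y, [::], g), mu) /\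
    follow k beta lam mu.

Definition sym_edge (k : nat) (v : vertex) (tau : sym) (w : vertex) : Prop :=
  is_vertex k v /\ is_vertex k w /\
  exists X alpha beta lam,
    v = ((X, alpha, tau :: beta), lam) /\ w = ((X, alpha ++ [:: tau], beta), lam).

Inductive reach (k : nat) : vertex -> list sym -> Prop :=
| reach_start eta : List.In (start G, eta) (prods G) ->
    reach k ((start G, [::], eta), nseq k GEnd) [::]
| reach_eps v w zeta : reach k v zeta -> eps_edge k v w -> reach k w zeta
| reach_sym v tau w zeta : reach k v zeta -> sym_edge k v tau w ->
    reach k w (zeta ++ [:: tau]).

Inductive action := Reduce of production | Shift.

Definition has_action (k : nat) (v : vertex) (mu : list (gamma Sigma))
  (a : action) : Prop :=
  is_vertex k v /\
  ((exists X alpha lam, v = ((X, alpha, [::]), lam) /\ mu = lam /\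
       a = Reduce (X, alpha)) \/
   (exists X alpha s beta lam, v = ((X, alpha, inr s :: beta), lam) /\
       follow k (inr s :: beta) lam mu /\ a = Shift)).

Definition conflicting (k : nat) (v1 v2 : vertex) (mu : list (gamma Sigma)) :=
  exists a1 a2, has_action k v1 mu a1 /\ has_action k v2 mu a2 /\ a1 <> a2.

Definition compatible (k : nat) (d : dotted) (mu lam : list (gamma Sigma)) :=
  follow k d.2 lam mu.

(* potentially-conflicting lookahead (reachability in the LR(0) NFA, k = 0) *)
Definition pot_conflicting (k : nat) (d : dotted) (mu : list (gamma Sigma)) :=
  size mu = k /\
  exists d' lam lam' zeta,
    U k (under d) lam /\ U k (under d') lam' /\
    reach 0 (d, nseq 0 GEnd) zeta /\ reach 0 (d', nseq 0 GEnd) zeta /\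
    conflicting k (d, lam) (d', lam') mu.

Definition lequiv (k : nat) (d : dotted) (lam lam' : list (gamma Sigma)) :=
  forall mu, pot_conflicting k d mu ->
    (compatible k d mu lam <-> compatible k d mu lam').

End LR.

(* Main.v *)
Require Import Defs.
From mathcomp Require Import all_boot.
From Stdlib Require Import List Relations.

Section Aux.
Variables (Lam : finType) (Sigma : Type) (G : grammar Lam Sigma).

Lemma step_split (a b y : list (ssym Lam Sigma)) : step G (a ++ b) y ->
  (exists a', y = a' ++ b /\ step G a a') \/ (exists b', y = a ++ b' /\ step G b b').
Proof.
  move=> [u [w [X [g [Hin [Hx Hy]]]]]].
  have [l [[Ha Hw]|[Hu Hb]]] := app_eq_app _ _ _ _ Hx.
  - destruct l as [|c l'].
    + right. rewrite app_nil_r in Ha. subst. exists (map (emb (Sigma:=Sigma)) g ++ w).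
      split => //. exists [::], w, X, g. by split.
    + left. injection Hw => Hw' Hc. subst.
      exists (u ++ map (emb (Sigma:=Sigma)) g ++ l'). split.
      * by rewrite -!app_assoc.
      * exists u, l', X, g. by split.
  - right. subst. exists (l ++ map (emb (Sigma:=Sigma)) g ++ w). split.
    + by rewrite app_assoc.
    + exists l, w, X, g. by split.
Qed.

Lemma rt_split {x z : list (ssym Lam Sigma)} : clos_refl_trans _ (step G) x z ->
  forall a b, x = a ++ b -> exists z1 z2, z = z1 ++ z2 /\
    clos_refl_trans _ (step G) a z1 /\ clos_refl_trans _ (step G) b z2.
Proof.
  move=> H; apply clos_rt_rt1n in H; elim: H => [x0|x0 y z0 Hs Hr IH] a b Hx.
  - exists a, b. subst. split => //. split; apply rt_refl.
  - subst. have [[a' [Hy Ha]]|[b' [Hy Hb]]] := step_split _ _ _ Hs.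
    + have [z1 [z2 [Hz [H1 H2]]]] := IH _ _ Hy.
      exists z1, z2. split => //. split => //. apply: rt_trans (rt_step _ _ _ _ Ha) H1.
    + have [z1 [z2 [Hz [H1 H2]]]] := IH _ _ Hy.
      exists z1, z2. split => //. split => //. apply: rt_trans (rt_step _ _ _ _ Hb) H2.
Qed.

Lemma follow0 k beta lam mu : follow G k beta lam mu -> follow G 0 beta [::] [::].
Proof.
  move=> [x [[x0 [Hx0 Hrt]] _]]. subst.
  have [z1 [z2 [Hz [H1 _]]]] := rt_split Hrt _ _ erefl.
  have [y1 [y2 [_ [Hy1 _]]]] := map_eq_app _ _ _ _ Hz.
  exists y1. split => //. exists (map (emb (Sigma:=Sigma)) beta ++ map inr [::]).
  split => //. by rewrite /= app_nil_r Hy1. by case: y1 Hy1.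
Qed.

Lemma U0 k p l : U G k p l -> U G 0 p [::].
Proof.
  elim => [eta H|X alpha Y beta lam g mu H1 HU IH H2 Hf].
  - exact: (U_start 0 H).
  - apply: (U_step H1 IH H2). exact: follow0 Hf.
Qed.

Lemma Usize k p l : U G k p l -> size l = k.
Proof.
  elim => [eta H|X alpha Y beta lam g mu H1 HU IH H2 Hf].
  - by rewrite size_nseq.
  - move: Hf => [x [[x0 [Hx0 Hrt]] Hmu]]. subst.
    have [z1 [z2 [Hz [_ H2']]]] := rt_split Hrt _ _ erefl.
    have [y1 [y2 [Hy [_ Hy2]]]] := map_eq_app _ _ _ _ Hz.
    have : forall a c, clos_refl_trans _ (step G) a c ->
        forall t, a = map inr t -> c = a.
      move=> a c Hac; apply clos_rt_rt1n in Hac; case: Hac => [//|y0 z0 [u [w [X0 [g0 [_ [Hx _]]]]]] _ t Ht].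
      subst. have [t1 [t2 [_ [_ Ht2]]]] := map_eq_app _ _ _ _ (esym Ht).
      by case: t2 Ht2.
    move=> /(_ _ _ H2' lam erefl) Hz2. subst.
    have Hl : y2 = lam.
      move: Hz2. clear. elim: y2 lam => [|c y2 IH] [|d lam] //= [-> /IH ->] //.
    subst. rewrite size_take -/(cat y1 lam) size_cat.
    case: ifP => // /negbT; rewrite -leqNgt => H; apply/eqP; by rewrite eqn_leq H leq_addl.
Qed.

Lemma reach0 k v zeta : reach G k v zeta -> reach G 0 (v.1, [::]) zeta.
Proof.
  elim => [eta H|v0 w z0 Hr IH [[Hd1 Hu1] [[Hd2 Hu2] E]]|v0 tau w z0 Hr IH [[Hd1 Hu1] [[Hd2 Hu2] E]]].
  - exact: (reach_start 0 H).
  - apply: (reach_eps IH). split; first by split => //; exact: U0 Hu1.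
    split; first by split => //; exact: U0 Hu2.
    move: E => [X [alpha [Y [beta [lam [g [mu [-> [-> Hf]]]]]]]]].
    exists X, alpha, Y, beta, [::], g, [::]. split => //. split => //. exact: follow0 Hf.
  - apply: (reach_sym IH (tau := tau)). split; first by split => //; exact: U0 Hu1.
    split; first by split => //; exact: U0 Hu2.
    move: E => [X [alpha [beta [lam [-> ->]]]]].
    by exists X, alpha, beta, [::].
Qed.

End Aux.

Section Main.
Variables (Lam : finType) (Sigma : Type) (G : grammar Lam Sigma).

Lemma term_rt (t : list (gamma Sigma)) (c : list (ssym Lam Sigma)) :
  clos_refl_trans _ (step G) (map inr t) c -> c = map inr t.
Proof.
  move=> Hac; apply clos_rt_rt1n in Hac.
  case: Hac => [//|y0 z0 [u [w [X0 [g0 [_ [Ht _]]]]]] _].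
  have [t1 [t2 [_ [_ Ht2]]]] := map_eq_app _ _ _ _ Ht.
  by case: t2 Ht2.
Qed.

Lemma map_inr_inj (a b : list (gamma Sigma)) :
  map (@inr Lam (gamma Sigma)) a = map inr b -> a = b.
Proof. elim: a b => [|c a IH] [|d b] //= [-> /IH ->] //. Qed.

Lemma act_compat k d l mu a : has_action G k (d, l) mu a -> size l = k ->
  compatible G k d mu l.
Proof.
  move=> [_ [[X [alpha [lam [[-> ->] [-> _]]]]]|[X [alpha [s [beta [lam [[-> ->] [Hf _]]]]]]]]] Hs //.
  exists lam. split; last by rewrite take_oversize // Hs.
  exists (map inr lam). split; last exact: rt_refl. by [].
Qed.

Lemma compat_act k d l l' mu a : has_action G k (d, l) mu a ->
  is_vertex G k (d, l') -> size l' = k -> compatible G k d mu l' ->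
  has_action G k (d, l') mu a.
Proof.
  move=> [_ [[X [alpha [lam [[-> _] [_ ->]]]]]|[X [alpha [s [beta [lam [[-> _] [_ ->]]]]]]]]] Hv Hs Hc;
    split => //.
  - left. exists X, alpha, l'. split => //. split => //.
    move: Hc => [x [[x0 [Hx0 Hrt]] ->]]. subst. 
    have := term_rt l' _ Hrt => /map_inr_inj ->. by rewrite take_oversize.
  - right. by exists X, alpha, s, beta, l'.
Qed.

End Main.

Theorem mainTheorem12 (Lam : finType) (Sigma : Type) (G : grammar Lam Sigma)
  (k : nat) (d1 d2 : dotted Lam Sigma) (l1 l2 : list (gamma Sigma))
  (zeta : list (sym Lam Sigma)) (mu : list (gamma Sigma)) :
  is_vertex G k (d1, l1) -> is_vertex G k (d2, l2) ->
  reach G k (d1, l1) zeta -> reach G k (d2, l2) zeta ->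
  size mu = k ->
  conflicting G k (d1, l1) (d2, l2) mu ->
  forall l1', U G k (under d1) l1' -> lequiv G k d1 l1' l1 ->
  forall l2', U G k (under d2) l2' -> lequiv G k d2 l2' l2 ->
  conflicting G k (d1, l1') (d2, l2') mu.
Proof.
  move=> [Hd1 Hu1] [Hd2 Hu2] Hr1 Hr2 Hmu [a1 [a2 [Ha1 [Ha2 Hne]]]] l1' Hu1' Heq1 l2' Hu2' Heq2.
  have R1 := reach0 _ _ _ _ _ _ Hr1. have R2 := reach0 _ _ _ _ _ _ Hr2.
  have P1 : pot_conflicting G k d1 mu.
    split => //. exists d2, l1, l2, zeta. do 4 (split => //). by exists a1, a2.
  have P2 : pot_conflicting G k d2 mu.
    split => //. exists d1, l2, l1, zeta. do 4 (split => //). by exists a2, a1; do 2 (split => //); auto.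
  exists a1, a2. split; last split => //.
  - eapply compat_act; [exact: Ha1| by split |exact: Usize _ _ _ _ _ _ Hu1'|].
    apply/(Heq1 _ P1). eapply act_compat; [exact: Ha1|]. exact: Usize _ _ _ _ _ _ Hu1.
  - eapply compat_act; [exact: Ha2| by split |exact: Usize _ _ _ _ _ _ Hu2'|].
    apply/(Heq2 _ P2). eapply act_compat; [exact: Ha2|]. exact: Usize _ _ _ _ _ _ Hu2.
Qed.
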